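(* Let $v=(x,y,z)\in S$ be a point with at least one irrational coordinate. Then $G^k(v)\ne(0,0,0)$ for all $k\ge0$, so its itinerary is defined, and: the itinerary of $v$ consists only of symbols of type $\mathbb{A}$ if and only if $y=z=0$. Moreover, if the itinerary is $\mathbb{A}_{a_1},\mathbb{A}_{a_2},\dots$, then $x=[0;a_1,a_2,\dots]$ (regular continued fraction).
   Context: Let $S = \{(x,y,z)\in\mathbb{R}^3 : 0\le z\le y\le x\le 1\}$. For integers $n\ge1$ define $\mathbb{A}_n = \{\frac1{n+1} < x \le \frac1n,\ 0\le z\le y\le 1-nx\}$, $\mathbb{B}_n = \{0\le z\le 1-nx < y \le x\}$, $\mathbb{C}_n = \{1-nx < z \le y \le x \le \frac1n\}$; together with $\{(0,0,0)\}$ they partition $S$. The 3-dimensional Gauss map $G:S\to S$ is $G(0,0,0)=(0,0,0)$, $G(x,y,z)=\left(\frac1x-n,\frac yx,\frac zx\right)$ on $\mathbb{A}_n$, $G(x,y,z)=\left(\frac{1-y}{x}-n+1,\frac{x-y+z}{x},\frac{x-y}{x}\right)$ on $\mathbb{B}_n$, $G(x,y,z)=\left(\frac{1-z}{x}-n+1,\frac{x-z}{x},\frac{y-z}{x}\right)$ on $\mathbb{C}_n$. For a point $v$ whose forward orbit never hits the origin, its itinerary is the sequence $\mathbb{X}_{a_1},\mathbb{X}_{a_2},\dots$ ($\mathbb{X}\in\{\mathbb{A},\mathbb{B},\mathbb{C}\}$, $a_k\ge1$) with $G^{k-1}(v)\in\mathbb{X}_{a_k}$ for all $k\ge1$. 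*)

(* Defs.v *)
From Stdlib Require Import Reals Lra QArith Qreals ClassicalEpsilon.
Open Scope R_scope.

Definition pt : Type := (R * R * R)%type.

Definition inS (v : pt) : Prop :=
  let '(x, y, z) := v in 0 <= z /\ z <= y /\ y <= x /\ x <= 1.

Definition inA (n : nat) (v : pt) : Prop :=
  let '(x, y, z) := v in
  (1 <= n)%nat /\ inS v /\ 1 / (INR n + 1) < x /\ x <= 1 / INR n /\
  0 <= z /\ z <= y /\ y <= 1 - INR n * x.

Definition inB (n : nat) (v : pt) : Prop :=
  let '(x, y, z) := v in
  (1 <= n)%nat /\ inS v /\ 0 <= z /\ z <= 1 - INR n * x /\
  1 - INR n * x < y /\ y <= x.

Definition inC (n : nat) (v : pt) : Prop :=
  let '(x, y, z) := v in
  (1 <= n)%nat /\ inS v /\ 1 - INR n * x < z /\ z <= y /\ y <= x /\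
  x <= 1 / INR n.

Definition GA (n : nat) (v : pt) : pt :=
  let '(x, y, z) := v in (1 / x - INR n, y / x, z / x).
Definition GB (n : nat) (v : pt) : pt :=
  let '(x, y, z) := v in ((1 - y) / x - INR n + 1, (x - y + z) / x, (x - y) / x).
Definition GC (n : nat) (v : pt) : pt :=
  let '(x, y, z) := v in ((1 - z) / x - INR n + 1, (x - z) / x, (y - z) / x).

Definition origin : pt := (0, 0, 0).

Definition choose_n (P : nat -> Prop) : nat := epsilon (inhabits 0%nat) P.

(* The 3-dimensional Gauss map.  The index n in each branch is the (unique)
   n with v in the corresponding region; outside S the value is irrelevant. *)
Definition G (v : pt) : pt :=
  if excluded_middle_informative (v = origin) then origin else
  if excluded_middle_informative (exists n, inA n v) then GA (choose_n (fun n => inA n v)) v else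
  if excluded_middle_informative (exists n, inB n v) then GB (choose_n (fun n => inB n v)) v else
  if excluded_middle_informative (exists n, inC n v) then GC (choose_n (fun n => inC n v)) v else
  v.

Definition Giter (k : nat) (v : pt) : pt := Nat.iter k G v.

Definition irrational (r : R) : Prop := ~ (exists q : Q, Q2R q = r).

Fixpoint cf_tail (a : nat -> nat) (s len : nat) : R :=
  match len with
  | O => 0
  | S l => 1 / (INR (a s) + cf_tail a (S s) l)
  end.

(* x = [0; a_0, a_1, ...] : the regular continued fraction converges to x *)
Definition is_cf_value (a : nat -> nat) (x : R) : Prop :=
  (forall k, (1 <= a k)%nat) /\ Un_cv (fun m => cf_tail a 0 m) x.

(* Main.v *)
Require Import Defs.
From Stdlib Require Import Reals ZArith QArith Qreals Lra Lia ClassicalEpsilon.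
Open Scope R_scope.

Definition rat (r : R) : Prop := exists q : Q, Q2R q = r.

Lemma rat_eq a b : rat a -> a = b -> rat b.
Proof. intros H ->; exact H. Qed.
Lemma rat_plus a b : rat a -> rat b -> rat (a + b).
Proof. intros [p <-] [q <-]; exists (p + q)%Q; apply Q2R_plus. Qed.
Lemma rat_mult a b : rat a -> rat b -> rat (a * b).
Proof. intros [p <-] [q <-]; exists (p * q)%Q; apply Q2R_mult. Qed.
Lemma rat_opp a : rat a -> rat (- a).
Proof. intros [p <-]; exists (- p)%Q; apply Q2R_opp. Qed.
Lemma rat_inv a : rat a -> rat (/ a).
Proof.
  intros [p <-]. destruct (Req_dec (Q2R p) 0) as [E|E].
  - exists 0%Q. rewrite E, Rinv_0. unfold Q2R; simpl; lra.
  - exists (/ p)%Q. apply Q2R_inv. intro H. apply E. apply Qeq_eqR in H.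
    rewrite H. unfold Q2R; simpl; lra.
Qed.
Lemma rat_0 : rat 0. Proof. exists 0%Q; unfold Q2R; simpl; lra. Qed.
Lemma rat_1 : rat 1. Proof. exists 1%Q; unfold Q2R; simpl; lra. Qed.
Lemma rat_nat n : rat (INR n).
Proof.
  induction n. simpl; apply rat_0.
  rewrite S_INR; apply rat_plus; auto; apply rat_1.
Qed.

Definition pX (w : pt) := fst (fst w).
Definition pY (w : pt) := snd (fst w).
Definition pZ (w : pt) := snd w.

Lemma G_cases w :
  (w = origin /\ G w = origin) \/
  (exists n, inA n w /\ G w = GA n w) \/
  (exists n, inB n w /\ G w = GB n w) \/
  (exists n, inC n w /\ G w = GC n w) \/ G w = w.
Proof.
  unfold G.
  destruct (excluded_middle_informative (w = origin)); [left; auto|].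
  destruct (excluded_middle_informative (exists n, inA n w)) as [h|].
  { right; left. exists (choose_n (fun n => inA n w)). split; auto.
    unfold choose_n; apply epsilon_spec; auto. }
  destruct (excluded_middle_informative (exists n, inB n w)) as [h|].
  { right; right; left. exists (choose_n (fun n => inB n w)). split; auto.
    unfold choose_n; apply epsilon_spec; auto. }
  destruct (excluded_middle_informative (exists n, inC n w)) as [h|].
  { right; right; right; left. exists (choose_n (fun n => inC n w)). split; auto.
    unfold choose_n; apply epsilon_spec; auto. }
  right; right; right; right; auto.
Qed.

Definition allQ (w : pt) : Prop := rat (pX w) /\ rat (pY w) /\ rat (pZ w).

Lemma allQ_back w : allQ (G w) -> allQ w.
Proof.
  destruct (G_cases w) as [[-> _]|[[n [H E]]|[[n [H E]]|[[n [H E]]|E]]]];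
    rewrite ?E; auto.
  - intros _. unfold allQ, pX, pY, pZ; simpl; repeat split; apply rat_0.
  - destruct w as [[x y] z]. unfold inA, inS in H.
    destruct H as (H1 & _ & H2 & _).
    assert (Hx : 0 < x). { apply Rlt_trans with (2 := H2). apply Rdiv_lt_0_compat; try lra.
      pose proof (pos_INR n); lra. }
    unfold allQ, pX, pY, pZ, GA; simpl. intros (h1 & h2 & h3).
    assert (hi : rat (1 / x)). { apply rat_eq with (1 / x - INR n + INR n).
      apply rat_plus; auto; apply rat_nat. ring. }
    assert (hx : rat x). { apply rat_eq with (/ (1/x)). apply rat_inv; auto. field; lra. }
    repeat split; auto.
    + apply rat_eq with (y / x * x). apply rat_mult; auto. field; lra.
    + apply rat_eq with (z / x * x). apply rat_mult; auto. field; lra.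
  - destruct w as [[x y] z]. unfold inB, inS in H.
    destruct H as (H1 & (Hs1 & Hs2 & Hs3 & Hs4) & H2 & H3 & H4 & H5).
    assert (Hx : 0 < x). { destruct (Rle_lt_dec x 0); auto.
      pose proof (pos_INR n). exfalso. nra. }
    unfold allQ, pX, pY, pZ, GB; simpl. intros (h1 & h2 & h3).
    assert (hi : rat (1 / x)). {
      apply rat_eq with ((1 - y) / x - INR n + 1 + INR n - (x - y) / x).
      apply rat_plus; [apply rat_plus; auto; apply rat_nat|apply rat_opp; auto].
      field; lra. }
    assert (hx : rat x). { apply rat_eq with (/ (1/x)). apply rat_inv; auto. field; lra. }
    repeat split; auto.
    + apply rat_eq with ((1 - (x - y) / x) * x).
      apply rat_mult; auto. apply rat_plus; [apply rat_1| apply rat_opp; auto]. field; lra.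
    + apply rat_eq with (((x - y + z) / x - (x - y) / x) * x).
      apply rat_mult; auto. apply rat_plus; [auto| apply rat_opp; auto]. field; lra.
  - destruct w as [[x y] z]. unfold inC, inS in H.
    destruct H as (H1 & (Hs1 & Hs2 & Hs3 & Hs4) & H2 & H3 & H4 & H5).
    assert (Hx : 0 < x). { destruct (Rle_lt_dec x 0); auto.
      pose proof (pos_INR n). exfalso. nra. }
    unfold allQ, pX, pY, pZ, GC; simpl. intros (h1 & h2 & h3).
    assert (hi : rat (1 / x)). {
      apply rat_eq with ((1 - z) / x - INR n + 1 + INR n - (x - z) / x).
      apply rat_plus; [apply rat_plus; auto; apply rat_nat|apply rat_opp; auto].
      field; lra. }
    assert (hx : rat x). { apply rat_eq with (/ (1/x)). apply rat_inv; auto. field; lra. }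
    assert (hz : rat z). { apply rat_eq with ((1 - (x - z) / x) * x).
      apply rat_mult; auto. apply rat_plus; [apply rat_1| apply rat_opp; auto]. field; lra. }
    repeat split; auto.
    apply rat_eq with ((y - z) / x * x + z). apply rat_plus; auto.
      apply rat_mult; auto. field; lra.
Qed.

Lemma inA_mul n x y z : inA n (x, y, z) ->
  (1 <= n)%nat /\ 1 <= INR n /\ 0 <= z /\ z <= y /\ y <= x /\ x <= 1 /\
  1 < x * (INR n + 1) /\ x * INR n <= 1 /\ y <= 1 - INR n * x /\ 0 < x.
Proof.
  unfold inA, inS. intros (H1 & (s1 & s2 & s3 & s4) & H2 & H3 & H4 & H5 & H6).
  assert (hn : 1 <= INR n) by (apply (le_INR 1); auto).
  assert (e1 : 1 / (INR n + 1) * (INR n + 1) = 1) by (field; lra).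
  assert (e2 : 1 / INR n * INR n = 1) by (field; lra).
  assert (p : 0 < 1 / (INR n + 1)) by (apply Rdiv_lt_0_compat; lra).
  repeat split; auto; try nra.
Qed.

Lemma inA_uniq n m w : inA n w -> inA m w -> n = m.
Proof.
  destruct w as [[x y] z]. intros H1 H2.
  apply inA_mul in H1; apply inA_mul in H2.
  destruct (Nat.lt_total n m) as [h|[h|h]]; auto; exfalso.
  - assert (INR n + 1 <= INR m) by (rewrite <- S_INR; apply le_INR; lia). nra.
  - assert (INR m + 1 <= INR n) by (rewrite <- S_INR; apply le_INR; lia). nra.
Qed.

Lemma G_A n w : inA n w -> G w = GA n w.
Proof.
  intros H. unfold G.
  destruct (excluded_middle_informative (w = origin)) as [->|].
  { apply inA_mul in H; lra. }
  destruct (excluded_middle_informative (exists n, inA n w)) as [h|h].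
  - f_equal. apply (inA_uniq _ _ w); auto. unfold choose_n; apply epsilon_spec; auto.
  - exfalso; eauto.
Qed.

Lemma G_A' n w : inA n w ->
  pX (G w) = 1 / pX w - INR n /\ pY (G w) = pY w / pX w /\ pZ (G w) = pZ w / pX w.
Proof. intros H; rewrite (G_A n w H). destruct w as [[x y] z]; unfold GA, pX, pY, pZ; simpl; auto. Qed.

Lemma exists_A x : 0 < x <= 1 -> exists n, inA n (x, 0, 0).
Proof.
  intros Hx. set (N := (up (1 / x) - 1)%Z).
  destruct (archimed (1 / x)) as [a1 a2].
  assert (e : 1 / x * x = 1) by (field; lra).
  assert (hN1 : IZR N <= 1 / x) by (unfold N; rewrite minus_IZR; simpl; lra).
  assert (hN2 : 1 / x < IZR N + 1) by (unfold N; rewrite minus_IZR; simpl; lra).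
  assert (hge : 1 <= 1 / x) by nra.
  assert (hN : (1 <= N)%Z) by (assert (0 < IZR N) by lra; apply lt_IZR in H; lia).
  exists (Z.to_nat N).
  assert (hI : INR (Z.to_nat N) = IZR N) by (rewrite INR_IZR_INZ, Z2Nat.id; auto; lia).
  unfold inA, inS. rewrite hI.
  assert (1 <= IZR N) by (apply IZR_le; auto).
  repeat split; try lra.
  - lia.
  - apply Rmult_lt_reg_r with (IZR N + 1); try lra.
    replace (1 / (IZR N + 1) * (IZR N + 1)) with 1 by (field; lra). nra.
  - apply Rmult_le_reg_r with (IZR N); try lra.
    replace (1 / (IZR N) * (IZR N)) with 1 by (field; lra). nra.
  - nra.
Qed.

Lemma inA_mul' n w : inA n w ->
  (1 <= n)%nat /\ 1 <= INR n /\ 0 <= pZ w /\ pZ w <= pY w /\ pY w <= pX w /\ pX w <= 1 /\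
  1 < pX w * (INR n + 1) /\ pX w * INR n <= 1 /\ pY w <= 1 - INR n * pX w /\ 0 < pX w.
Proof. destruct w as [[x y] z]; apply inA_mul. Qed.

Lemma y_step n m w : inA n w -> inA m (G w) -> 2 * pY w <= pY (G (G w)).
Proof.
  intros H1 H2.
  destruct (G_A' _ _ H1) as (e1 & e2 & _).
  destruct (G_A' _ _ H2) as (f1 & f2 & _).
  pose proof (inA_mul' _ _ H1) as (_ & a1 & a2 & a3 & a4 & a5 & a6 & a7 & a8 & a9).
  pose proof (inA_mul' _ _ H2) as (_ & b1 & b2 & b3 & b4 & b5 & b6 & b7 & b8 & b9).
  rewrite f2, e2, e1. rewrite e1 in b9.
  set (x := pX w) in *. set (y := pY w) in *.
  assert (hx : 0 < 1 - INR n * x).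
  { assert (0 < (1 / x - INR n) * x) by (apply Rmult_lt_0_compat; lra).
    replace ((1 / x - INR n) * x) with (1 - INR n * x) in H by (field; lra). lra. }
  replace (y / x / (1 / x - INR n)) with (y / (1 - INR n * x)) by (field; split; lra).
  assert (c1 : 0 < INR n * (x * (INR n + 1) - 1)) by (apply Rmult_lt_0_compat; lra).
  assert (c0 : (INR n + 1) * (1 - INR n * x) < 1) by nra.
  assert (c2 : 2 * (1 - INR n * x) <= (INR n + 1) * (1 - INR n * x)) by (apply Rmult_le_compat_r; lra).
  assert (c : 1 - INR n * x <= 1/2) by lra.
  apply Rmult_le_reg_r with (1 - INR n * x); auto.
  replace (y / (1 - INR n * x) * (1 - INR n * x)) with y by (field; lra).
  assert (0 <= y * (1 - 2*(1 - INR n * x))) by (apply Rmult_le_pos; lra). lra.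
Qed.

Fixpoint gt (a : nat -> nat) (s l : nat) (t : R) : R :=
  match l with
  | O => t
  | S l' => 1 / (INR (a s) + gt a (S s) l' t)
  end.

Lemma gt_cf a s l : cf_tail a s l = gt a s l 0.
Proof. revert s; induction l; intros s; simpl; auto. rewrite IHl; auto. Qed.

Lemma inv_bnd a u : 1 <= a -> 0 <= u -> 0 <= 1 / (a + u) <= 1.
Proof.
  intros. assert (e : 1 / (a + u) * (a + u) = 1) by (field; lra).
  assert (0 < 1 / (a + u)) by (apply Rdiv_lt_0_compat; lra). split; nra.
Qed.

Lemma gt_bnd a : (forall k, (1 <= a k)%nat) -> forall l s t, 0 <= t <= 1 -> 0 <= gt a s l t <= 1.
Proof.
  intros Ha l; induction l; intros s t Ht; simpl; auto.
  apply inv_bnd. apply (le_INR 1); auto. apply IHl; auto.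
Qed.

Lemma one_step a u u' : 1 <= a -> 0 <= u -> 0 <= u' ->
  Rabs (1 / (a + u) - 1 / (a + u')) <= Rabs (u - u').
Proof.
  intros. replace (1 / (a + u) - 1 / (a + u')) with ((u' - u) / ((a + u) * (a + u')))
    by (field; lra).
  unfold Rdiv at 1; rewrite Rabs_mult, Rabs_inv. rewrite (Rabs_pos_eq ((a + u) * (a + u'))) by nra.
  rewrite <- Rabs_Ropp. replace (- (u' - u)) with (u - u') by ring.
  set (P := Rabs (u - u')). assert (0 <= P) by apply Rabs_pos.
  set (q := (a + u) * (a + u')). assert (1 <= q) by (unfold q; nra).
  assert (e2 : / q * q = 1) by (field; lra).
  assert (0 < / q) by (apply Rinv_0_lt_compat; lra). nra.
Qed.

Lemma two_step a b u u' : 1 <= a -> 1 <= b -> 0 <= u -> 0 <= u' ->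
  Rabs (1 / (a + 1 / (b + u)) - 1 / (a + 1 / (b + u'))) <= Rabs (u - u') / 4.
Proof.
  intros. replace (1 / (a + 1 / (b + u)) - 1 / (a + 1 / (b + u')))
    with ((u - u') / ((a * (b + u) + 1) * (a * (b + u') + 1))).
  2:{ field. repeat split; try nra.
      all: intro h; assert (0 < 1 / (b + u')) by (apply Rdiv_lt_0_compat; lra);
           assert (0 < 1 / (b + u)) by (apply Rdiv_lt_0_compat; lra); nra. }
  unfold Rdiv at 1; rewrite Rabs_mult, Rabs_inv. rewrite (Rabs_pos_eq ((a * (b + u) + 1) * (a * (b + u') + 1))) by (apply Rmult_le_pos; nra).
  set (P := Rabs (u - u')). assert (0 <= P) by apply Rabs_pos.
  set (q := (a * (b + u) + 1) * (a * (b + u') + 1)). assert (2 <= a * (b + u) + 1) by nra. assert (2 <= a * (b + u') + 1) by nra. assert (4 <= q) by (unfold q; nra).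
  assert (e2 : / q * q = 1) by (field; lra).
  assert (0 < / q) by (apply Rinv_0_lt_compat; lra). nra.
Qed.

Lemma gt_contract a : (forall k, (1 <= a k)%nat) -> forall l,
  (forall s t t', 0 <= t <= 1 -> 0 <= t' <= 1 ->
     Rabs (gt a s l t - gt a s l t') <= 2 * (1/2) ^ l) /\
  (forall s t t', 0 <= t <= 1 -> 0 <= t' <= 1 ->
     Rabs (gt a s (S l) t - gt a s (S l) t') <= 2 * (1/2) ^ (S l)).
Proof.
  intros Ha. assert (HA : forall k, 1 <= INR (a k)) by (intro k; apply (le_INR 1); auto).
  induction l as [|l [IH1 IH2]].
  - split; intros s t t' Ht Ht'; simpl.
    + apply Rabs_le; lra.
    + eapply Rle_trans. apply one_step; auto; lra. apply Rabs_le; lra.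
  - split; auto. intros s t t' Ht Ht'. simpl gt.
    eapply Rle_trans. apply two_step; auto; apply gt_bnd; auto.
    specialize (IH1 (S (S s)) t t' Ht Ht'). simpl pow in *. lra.
Qed.


Lemma gt_exact a (xs : nat -> R) :
  (forall k, xs k = 1 / (INR (a k) + xs (S k))) ->
  forall l s, xs s = gt a s l (xs (s + l)%nat).
Proof.
  intros H l; induction l; intros s; simpl.
  - rewrite Nat.add_0_r; auto.
  - rewrite H, IHl. rewrite Nat.add_succ_r. reflexivity.
Qed.

Lemma cf_conv a (xs : nat -> R) :
  (forall k, (1 <= a k)%nat) ->
  (forall k, 0 <= xs k <= 1) ->
  (forall k, xs k = 1 / (INR (a k) + xs (S k))) ->
  Un_cv (fun m => cf_tail a 0 m) (xs 0%nat).
Proof.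
  intros Ha Hb Hr eps Heps.
  destruct (pow_lt_1_zero (1/2)) with (y := eps / 2) as [N HN].
  { rewrite Rabs_pos_eq; lra. } { lra. }
  exists N. intros n Hn. unfold R_dist. rewrite gt_cf.
  rewrite (gt_exact a xs Hr n 0%nat). simpl.
  eapply Rle_lt_trans. apply (proj1 (gt_contract a Ha n)); auto; lra.
  specialize (HN n Hn). rewrite Rabs_pos_eq in HN. lra.
  apply pow_le; lra.
Qed.

Theorem mainTheorem14 (x y z : R) :
  inS (x, y, z) ->
  (irrational x \/ irrational y \/ irrational z) ->
  (forall k : nat, Giter k (x, y, z) <> origin) /\
  ((forall k : nat, exists n : nat, inA n (Giter k (x, y, z))) <-> (y = 0 /\ z = 0)) /\
  (forall a : nat -> nat,
     (forall k : nat, inA (a k) (Giter k (x, y, z))) ->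
     is_cf_value a x).
Proof.
  intros HS Hirr.
  assert (Hq : forall k, ~ allQ (Giter k (x, y, z))).
  { induction k.
    - simpl. unfold allQ, pX, pY, pZ; simpl. intros (h1 & h2 & h3).
      destruct Hirr as [h|[h|h]]; apply h; auto.
    - intro h. apply IHk. apply allQ_back. exact h. }
  split; [|split].
  - intros k E. apply (Hq k). rewrite E. unfold allQ, pX, pY, pZ; simpl.
    repeat split; apply rat_0.
  - split.
    + intros HA.
      assert (Hy : forall m, pY (Giter (2 * m) (x, y, z)) * (1/2) ^ m >= y).
      { induction m.
        - simpl. unfold pY; simpl; lra.
        - replace (2 * S m)%nat with (S (S (2 * m))) by lia.
          destruct (HA (2 * m)%nat) as [n1 h1].
          destruct (HA (S (2 * m))) as [n2 h2].
          pose proof (y_step _ _ _ h1 h2) as st.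
          change (Giter (S (S (2 * m))) (x, y, z)) with (G (G (Giter (2 * m) (x, y, z)))).
          simpl pow.
          assert (0 <= (1/2)^m) by (apply pow_le; lra). nra. }
      unfold inS in HS.
      assert (y <= 0).
      { apply Rnot_lt_le. intro hy.
        destruct (pow_lt_1_zero (1/2)) with (y := y) as [N HN].
        { rewrite Rabs_pos_eq; lra. } { lra. }
        specialize (HN N (Nat.le_refl _)). rewrite Rabs_pos_eq in HN by (apply pow_le; lra).
        specialize (Hy N). destruct (HA (2 * N)%nat) as [n h].
        pose proof (inA_mul' _ _ h) as (_ & _ & _ & _ & a4 & a5 & _).
        assert (0 <= (1/2)^N) by (apply pow_le; lra). nra. }
      lra.
    + intros [-> ->].
      assert (Hx : ~ rat x).
      { destruct Hirr as [h|[h|h]]; auto; exfalso; apply h; apply rat_0. }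
      assert (Inv : forall k, exists x', Giter k (x, 0, 0) = (x', 0, 0) /\ 0 < x' <= 1 /\ ~ rat x').
      { induction k.
        - exists x. unfold inS in HS. split; auto. split; auto.
          split; try lra. destruct (Req_dec x 0); try lra. subst. exfalso; apply Hx, rat_0.
        - destruct IHk as (x' & E & h1 & h2).
          destruct (exists_A x' h1) as [n hn].
          change (Giter (S k) (x, 0, 0)) with (G (Giter k (x, 0, 0))).
          rewrite E, (G_A _ _ hn). unfold GA.
          exists (1 / x' - INR n).
          pose proof (inA_mul _ _ _ _ hn) as (_ & _ & _ & _ & _ & _ & a6 & a7 & _).
          assert (e : 1 / x' * x' = 1) by (field; lra).
          assert (nr : ~ rat (1 / x' - INR n)).
          { intro r. apply h2. apply rat_eq with (/ (1 / x' - INR n + INR n)).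
            apply rat_inv, rat_plus; auto; apply rat_nat. field; lra. }
          split.
          + f_equal; [f_equal|]; field; lra.
          + split; auto. split.
            * destruct (Req_dec (1 / x' - INR n) 0) as [h0|h0].
              { exfalso; apply nr; rewrite h0; apply rat_0. }
              assert (x' * (1 / x' - INR n) >= 0) by nra.
              assert (0 <= 1 / x' - INR n) by nra. lra.
            * nra. }
      intros k. destruct (Inv k) as (x' & E & h1 & _). rewrite E.
      apply exists_A; auto.
  - intros a Ha.
    set (xs := fun k => pX (Giter k (x, y, z))).
    assert (Ha1 : forall k, (1 <= a k)%nat) by (intro k; exact (proj1 (inA_mul' _ _ (Ha k)))).
    split; auto.
    change x with (xs 0%nat).
    apply cf_conv; auto.
    + intro k. pose proof (inA_mul' _ _ (Ha k)) as (_ & _ & a2 & a3 & a4 & a5 & _).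
      unfold xs; lra.
    + intro k. unfold xs.
      change (Giter (S k) (x, y, z)) with (G (Giter k (x, y, z))).
      destruct (G_A' _ _ (Ha k)) as (e & _). rewrite e.
      pose proof (inA_mul' _ _ (Ha k)) as (_ & _ & _ & _ & _ & _ & _ & _ & _ & a9).
      field. split; lra.
Qed.
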